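(* Let $E$ be a contact Riemannian Lie algebroid with associated almost contact Riemannian structure $(F_E,\xi,\eta,g_E)$, and let $\nabla$ be the Levi-Civita connection of $g_E$. Then: (i) $N_E^{(2)}=0$ and $N_E^{(4)}=0$; (ii) $N_E^{(3)}=0$ if and only if $\xi$ is a Killing section, i.e. $\mathcal{L}_\xi g_E=0$; (iii) $\nabla_\xi F_E=0$.
   Context: A Lie algebroid $(E,\rho_E,[\cdot,\cdot]_E)$ over $M$ is a vector bundle with anchor $\rho_E:E\to TM$ and Lie bracket on $\Gamma(E)$ with $[s_1,fs_2]_E=f[s_1,s_2]_E+\rho_E(s_1)(f)s_2$. For a 1-form $\eta$, $(d_E\eta)(s_1,s_2)=\frac12\{\rho_E(s_1)(\eta(s_2))-\rho_E(s_2)(\eta(s_1))-\eta([s_1,s_2]_E)\}$. For $E$ of rank $2m+1$, an almost contact Riemannian structure $(F_E,\xi,\eta,g_E)$: endomorphism $F_E$, $\xi\in\Gamma(E)$, $\eta\in\Gamma(E^* )$, bundle metric $g_E$, with $F_E^2=-I_E+\eta\otimes\xi$, $\eta(\xi)=1$, $g_E(F_Es_1,F_Es_2)=g_E(s_1,s_2)-\eta(s_1)\eta(s_2)$; fundamental form $\Omega_E(s_1,s_2)=g_E(s_1,F_Es_2)$. $E$ is contact Riemannian if also $\eta\wedge(d_E\eta)^m$ vanishes nowhere and $d_E\eta=\Omega_E$. Lie derivatives along $s\in\Gamma(E)$: $(\mathcal{L}_s\eta)(s')=\rho_E(s)(\eta(s'))-\eta([s,s']_E)$; $(\mathcal{L}_sF_E)(s')=[s,F_Es']_E-F_E[s,s']_E$;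 $(\mathcal{L}_sg_E)(s_1,s_2)=\rho_E(s)(g_E(s_1,s_2))-g_E([s,s_1]_E,s_2)-g_E(s_1,[s,s_2]_E)$. Define $N_E^{(2)}(s_1,s_2)=(\mathcal{L}_{F_E(s_1)}\eta)(s_2)-(\mathcal{L}_{F_E(s_2)}\eta)(s_1)$, $N_E^{(3)}=\frac12\mathcal{L}_\xi F_E$, $N_E^{(4)}=\mathcal{L}_\xi\eta$. The Levi-Civita connection $\nabla$ is the unique $E$-connection ($\nabla_{fs}s'=f\nabla_ss'$, $\nabla_s(fs')=f\nabla_ss'+\rho_E(s)(f)s'$) that is torsion-free ($\nabla_{s_1}s_2-\nabla_{s_2}s_1=[s_1,s_2]_E$) and metric ($\rho_E(s)(g_E(s_1,s_2))=g_E(\nabla_ss_1,s_2)+g_E(s_1,\nabla_ss_2)$); $(\nabla_sF_E)s'=\nabla_s(F_Es')-F_E(\nabla_ss')$. *)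

(* Defs.v *)
(* Algebraic (Lie--Rinehart style) model of a Lie algebroid
   over a smooth manifold M: C^oo(M) is an abstract commutative R-algebra
   equipped with point evaluations, Gamma(E) is a module over it. *)
From HB Require Import structures.
From mathcomp Require Import all_boot all_order all_algebra.
From mathcomp Require Import fingroup perm.
From mathcomp Require Import reals.
Set Implicit Arguments. Unset Strict Implicit. Unset Printing Implicit Defensive.
Import Order.TTheory GRing.Theory Num.Theory.
Local Open Scope ring_scope.

Record LieAlgebroid (R : realType) := {
  lb_M : Type;
  lb_C : comAlgType R;
  lb_ev : lb_M -> lb_C -> R;
  lb_Sec : lmodType lb_C;
  lb_anchor : lb_Sec -> lb_C -> lb_C;   (* rho_E(s) acting on functions *)
  lb_br : lb_Sec -> lb_Sec -> lb_Sec;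
  lb_ev_add : forall p f h, lb_ev p (f + h) = lb_ev p f + lb_ev p h;
  lb_ev_mul : forall p f h, lb_ev p (f * h) = lb_ev p f * lb_ev p h;
  lb_ev_scale : forall p (c : R) f, lb_ev p (c *: f) = c * lb_ev p f;
  lb_ev_one : forall p, lb_ev p 1 = 1;
  lb_ev_sep : forall f, (forall p, lb_ev p f = 0) -> f = 0;
  (* a section vanishing at every point is zero (vanishing at p defined
     algebraically: s lies in I_p Gamma(E), I_p = functions vanishing at p) *)
  lb_sec_sep : forall s : lb_Sec,
      (forall p, exists (n : nat) (f : 'I_n -> lb_C) (t : 'I_n -> lb_Sec),
          (forall i, lb_ev p (f i) = 0) /\ s = \sum_i f i *: t i) -> s = 0;
  lb_anchor_lin : forall (f : lb_C) s t h,
      lb_anchor (f *: s + t) h = f * lb_anchor s h + lb_anchor t h;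
  lb_anchor_add : forall s h1 h2,
      lb_anchor s (h1 + h2) = lb_anchor s h1 + lb_anchor s h2;
  lb_anchor_scale : forall s (c : R) h, lb_anchor s (c *: h) = c *: lb_anchor s h;
  lb_anchor_mul : forall s h1 h2,
      lb_anchor s (h1 * h2) = h1 * lb_anchor s h2 + lb_anchor s h1 * h2;
  lb_br_addl : forall s1 s2 t, lb_br (s1 + s2) t = lb_br s1 t + lb_br s2 t;
  lb_br_scalel : forall (c : R) s t, lb_br (c%:A *: s) t = c%:A *: lb_br s t;
  lb_br_skew : forall s t, lb_br s t = - lb_br t s;
  lb_br_jacobi : forall s1 s2 s3,
      lb_br s1 (lb_br s2 s3) + lb_br s2 (lb_br s3 s1) + lb_br s3 (lb_br s1 s2) = 0;
  lb_br_leibniz : forall s1 (f : lb_C) s2,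
      lb_br s1 (f *: s2) = f *: lb_br s1 s2 + lb_anchor s1 f *: s2;
  lb_anchor_br : forall s1 s2 h,
      lb_anchor (lb_br s1 s2) h
      = lb_anchor s1 (lb_anchor s2 h) - lb_anchor s2 (lb_anchor s1 h)
}.

Section Defs.
Variables (R : realType) (E : LieAlgebroid R).
Local Notation C := (lb_C E).
Local Notation S := (lb_Sec E).
Local Notation ev := (@lb_ev R E).
Local Notation rho := (@lb_anchor R E).
Local Notation br := (@lb_br R E).

Definition vanishes_at (p : lb_M E) (s : S) : Prop :=
  exists (n : nat) (f : 'I_n -> C) (t : 'I_n -> S),
    (forall i, ev p (f i) = 0) /\ s = \sum_i f i *: t i.

(* E has rank n: every fibre E_p = Gamma(E)/I_p Gamma(E) is n-dimensional *)
Definition has_rank (n : nat) : Prop :=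
  forall p : lb_M E, exists e : 'I_n -> S,
    (forall s : S, exists c : 'I_n -> R,
        vanishes_at p (s - \sum_i (c i)%:A *: e i)) /\
    (forall c : 'I_n -> R,
        vanishes_at p (\sum_i (c i)%:A *: e i) -> forall i, c i = 0).

Definition is_form1 (eta : S -> C) : Prop :=
  forall (f : C) s t, eta (f *: s + t) = f * eta s + eta t.
Definition is_endo (F : S -> S) : Prop :=
  forall (f : C) s t, F (f *: s + t) = f *: F s + F t.
Definition is_bundle_metric (g : S -> S -> C) : Prop :=
  (forall s t, g s t = g t s) /\
  (forall (f : C) s t u, g (f *: s + t) u = f * g s u + g t u) /\
  (forall p s, 0 <= ev p (g s s)) /\
  (forall p s, ev p (g s s) = 0 -> vanishes_at p s).

(* d_E of a 1-form, with the 1/2 convention *)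
Definition dE (eta : S -> C) (s1 s2 : S) : C :=
  (2^-1 : R) *: (rho s1 (eta s2) - rho s2 (eta s1) - eta (br s1 s2)).

Definition fundamental_form (F : S -> S) (g : S -> S -> C) (s1 s2 : S) : C :=
  g s1 (F s2).

Definition almost_contact_Riemannian (F : S -> S) (xi : S) (eta : S -> C)
    (g : S -> S -> C) : Prop :=
  [/\ is_endo F, is_form1 eta, is_bundle_metric g,
      (forall s, F (F s) = - s + eta s *: xi) /\ eta xi = 1 &
      (forall s1 s2, g (F s1) (F s2) = g s1 s2 - eta s1 * eta s2)].

(* value of eta /\ (d_E eta)^m on (s_0,...,s_2m), up to a nonzero constant
   factor (irrelevant for "vanishes nowhere") *)
Definition eta_wedge_deta_pow (m : nat) (eta : S -> C)
    (s : 'I_(m.*2.+1) -> S) : C :=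
  \sum_(sg : 'S_(m.*2.+1))
     ((-1) ^+ sg * eta (s (sg ord0)) *
      \prod_(k < m) dE eta (s (sg (inord k.*2.+1))) (s (sg (inord k.*2.+2))))%R.

Definition vanishes_nowhere_form (m : nat) (omega : ('I_(m.*2.+1) -> S) -> C)
  : Prop :=
  forall p : lb_M E, exists s, ev p (omega s) != 0.

Definition contact_Riemannian (m : nat) (F : S -> S) (xi : S) (eta : S -> C)
    (g : S -> S -> C) : Prop :=
  [/\ has_rank m.*2.+1,
      almost_contact_Riemannian F xi eta g,
      @vanishes_nowhere_form m (@eta_wedge_deta_pow m eta) &
      (forall s1 s2, dE eta s1 s2 = fundamental_form F g s1 s2)].

Definition Lie_form1 (s : S) (eta : S -> C) (s' : S) : C :=
  rho s (eta s') - eta (br s s').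
Definition Lie_endo (s : S) (F : S -> S) (s' : S) : S :=
  br s (F s') - F (br s s').
Definition Lie_metric (s : S) (g : S -> S -> C) (s1 s2 : S) : C :=
  rho s (g s1 s2) - g (br s s1) s2 - g s1 (br s s2).

Definition N2 (F : S -> S) (eta : S -> C) (s1 s2 : S) : C :=
  Lie_form1 (F s1) eta s2 - Lie_form1 (F s2) eta s1.
Definition N3 (F : S -> S) (xi : S) (s : S) : S :=
  (2^-1 : R)%:A *: Lie_endo xi F s.
Definition N4 (xi : S) (eta : S -> C) (s : S) : C :=
  Lie_form1 xi eta s.

Definition is_Levi_Civita (g : S -> S -> C) (nabla : S -> S -> S) : Prop :=
  [/\ (forall (f : C) s t u, nabla (f *: s + t) u = f *: nabla s u + nabla t u),
      (forall s t u, nabla s (t + u) = nabla s t + nabla s u),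
      (forall s (f : C) t, nabla s (f *: t) = f *: nabla s t + rho s f *: t),
      (forall s1 s2, nabla s1 s2 - nabla s2 s1 = br s1 s2) &
      (forall s s1 s2, rho s (g s1 s2) = g (nabla s s1) s2 + g s1 (nabla s s2))].

Definition cov_endo (nabla : S -> S -> S) (s : S) (F : S -> S) (s' : S) : S :=
  nabla s (F s') - F (nabla s s').

End Defs.

(* Main.v *)
Require Import Defs.
From HB Require Import structures.
From mathcomp Require Import all_boot all_order all_algebra.
From mathcomp Require Import fingroup perm.
From mathcomp Require Import reals.
From mathcomp Require Import ring.
Set Implicit Arguments. Unset Strict Implicit. Unset Printing Implicit Defensive.
Import GRing.Theory.
Local Open Scope ring_scope.

Lemma addr_idem (V : zmodType) (x : V) : x = x + x -> x = 0.
Proof. by move=> h; apply/eqP; rewrite -(addrI x (esym (etrans (addr0 x) h))). Qed.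

Lemma C_halve (R : realType) (E : LieAlgebroid R) (x : lb_C E) : x + x = 0 -> x = 0.
Proof.
move=> h.
have -> : x = (2^-1 : R) *: (x + x).
  by rewrite -mulr2n -scaler_nat scalerA mulVf ?scale1r // Num.Theory.pnatr_eq0.
by rewrite h scaler0.
Qed.

Lemma rho0 R (E : LieAlgebroid R) s : lb_anchor s (0 : lb_C E) = 0.
Proof. by apply: addr_idem; rewrite -lb_anchor_add addr0. Qed.

Lemma rhoN R (E : LieAlgebroid R) s (h : lb_C E) : lb_anchor s (- h) = - lb_anchor s h.
Proof. by apply/eqP; rewrite -addr_eq0 -lb_anchor_add addNr rho0. Qed.

Lemma rhoB R (E : LieAlgebroid R) s (h1 h2 : lb_C E) :
  lb_anchor s (h1 - h2) = lb_anchor s h1 - lb_anchor s h2.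
Proof. by rewrite lb_anchor_add rhoN. Qed.

Lemma rho1 R (E : LieAlgebroid R) s : lb_anchor s (1 : lb_C E) = 0.
Proof. have := lb_anchor_mul s (1 : lb_C E) 1. rewrite !mul1r mulr1. by move/addr_idem. Qed.

Lemma rhoSD R (E : LieAlgebroid R) (s t : lb_Sec E) h :
  lb_anchor (s + t) h = lb_anchor s h + lb_anchor t h.
Proof. by have := lb_anchor_lin 1 s t h; rewrite scale1r mul1r. Qed.

Lemma rhoS0 R (E : LieAlgebroid R) (h : lb_C E) : lb_anchor (0 : lb_Sec E) h = 0.
Proof. by apply: addr_idem; rewrite -rhoSD addr0. Qed.

Lemma rhoSN R (E : LieAlgebroid R) (s : lb_Sec E) h :
  lb_anchor (- s) h = - lb_anchor s h.
Proof. by apply/eqP; rewrite -addr_eq0 -rhoSD addNr rhoS0. Qed.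

Lemma rhoSB R (E : LieAlgebroid R) (s t : lb_Sec E) h :
  lb_anchor (s - t) h = lb_anchor s h - lb_anchor t h.
Proof. by rewrite rhoSD rhoSN. Qed.

Lemma brDr R (E : LieAlgebroid R) (s t u : lb_Sec E) :
  lb_br s (t + u) = lb_br s t + lb_br s u.
Proof. by rewrite lb_br_skew lb_br_addl opprD -!lb_br_skew. Qed.

Lemma br0l R (E : LieAlgebroid R) (s : lb_Sec E) : lb_br 0 s = 0.
Proof. by apply: addr_idem; rewrite -lb_br_addl addr0. Qed.

Lemma br0r R (E : LieAlgebroid R) (s : lb_Sec E) : lb_br s 0 = 0.
Proof. by rewrite lb_br_skew br0l oppr0. Qed.

Lemma brNl R (E : LieAlgebroid R) (s t : lb_Sec E) : lb_br (- s) t = - lb_br s t.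
Proof. by apply/eqP; rewrite -addr_eq0 -lb_br_addl addNr br0l. Qed.

Lemma brNr R (E : LieAlgebroid R) (s t : lb_Sec E) : lb_br s (- t) = - lb_br s t.
Proof. by rewrite lb_br_skew brNl -lb_br_skew. Qed.

Lemma brBr R (E : LieAlgebroid R) (s t u : lb_Sec E) :
  lb_br s (t - u) = lb_br s t - lb_br s u.
Proof. by rewrite brDr brNr. Qed.


Lemma form1_0 R (E : LieAlgebroid R) (eta : lb_Sec E -> lb_C E) :
  is_form1 eta -> eta 0 = 0.
Proof. move=> he; apply: addr_idem; have := he 1 0 0; by rewrite scaler0 addr0 mul1r. Qed.
Lemma form1_D R (E : LieAlgebroid R) (eta : lb_Sec E -> lb_C E) :
  is_form1 eta -> forall s t, eta (s + t) = eta s + eta t.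
Proof. move=> he s t; have := he 1 s t; by rewrite scale1r mul1r. Qed.
Lemma form1_Z R (E : LieAlgebroid R) (eta : lb_Sec E -> lb_C E) :
  is_form1 eta -> forall f s, eta (f *: s) = f * eta s.
Proof. move=> he f s; have := he f s 0; by rewrite addr0 (form1_0 he) addr0. Qed.
Lemma form1_N R (E : LieAlgebroid R) (eta : lb_Sec E -> lb_C E) :
  is_form1 eta -> forall s, eta (- s) = - eta s.
Proof. move=> he s; by rewrite -scaleN1r (form1_Z he) mulN1r. Qed.
Lemma form1_B R (E : LieAlgebroid R) (eta : lb_Sec E -> lb_C E) :
  is_form1 eta -> forall s t, eta (s - t) = eta s - eta t.
Proof. move=> he s t; by rewrite (form1_D he) (form1_N he). Qed.

Lemma endo_0 R (E : LieAlgebroid R) (F : lb_Sec E -> lb_Sec E) :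
  is_endo F -> F 0 = 0.
Proof. move=> he; apply: addr_idem; have := he 1 0 0; by rewrite scaler0 addr0 scale1r. Qed.
Lemma endo_D R (E : LieAlgebroid R) (F : lb_Sec E -> lb_Sec E) :
  is_endo F -> forall s t, F (s + t) = F s + F t.
Proof. move=> he s t; have := he 1 s t; by rewrite !scale1r. Qed.
Lemma endo_Z R (E : LieAlgebroid R) (F : lb_Sec E -> lb_Sec E) :
  is_endo F -> forall f s, F (f *: s) = f *: F s.
Proof. move=> he f s; have := he f s 0; by rewrite addr0 (endo_0 he) addr0. Qed.
Lemma endo_N R (E : LieAlgebroid R) (F : lb_Sec E -> lb_Sec E) :
  is_endo F -> forall s, F (- s) = - F s.
Proof. move=> he s; by rewrite -scaleN1r (endo_Z he) scaleN1r. Qed.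
Lemma endo_B R (E : LieAlgebroid R) (F : lb_Sec E -> lb_Sec E) :
  is_endo F -> forall s t, F (s - t) = F s - F t.
Proof. move=> he s t; by rewrite (endo_D he) (endo_N he). Qed.

Lemma gform R (E : LieAlgebroid R) (g : lb_Sec E -> lb_Sec E -> lb_C E) :
  is_bundle_metric g -> forall u, is_form1 (g ^~ u).
Proof. by case=> _ [h _] u f s t; apply: h. Qed.
Lemma gformr R (E : LieAlgebroid R) (g : lb_Sec E -> lb_Sec E -> lb_C E) :
  is_bundle_metric g -> forall u, is_form1 (g u).
Proof. move=> hg u f s t; case: (hg) => hs [h _]; by rewrite !(hs u) h. Qed.

Lemma g_nondeg R (E : LieAlgebroid R) (g : lb_Sec E -> lb_Sec E -> lb_C E) :
  is_bundle_metric g -> forall x, (forall y, g y x = 0) -> x = 0.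
Proof.
case=> _ [_ [_ hd]] x hx; apply: lb_sec_sep => p; apply: hd.
by rewrite hx; apply: addr_idem; rewrite -lb_ev_add addr0.
Qed.

Lemma C_sq0 R (E : LieAlgebroid R) (a : lb_C E) : a * a = 0 -> a = 0.
Proof.
move=> h; apply: lb_ev_sep => p.
have e0 : lb_ev p (0 : lb_C E) = 0 by apply: addr_idem; rewrite -lb_ev_add addr0.
have : lb_ev p a * lb_ev p a = 0 by rewrite -lb_ev_mul h.
by move/eqP; rewrite mulf_eq0 orbb => /eqP.
Qed.

Lemma br_self R (E : LieAlgebroid R) (s : lb_Sec E) : lb_br s s = 0.
Proof.
have h : lb_br s s + lb_br s s = 0 by rewrite {1}lb_br_skew addNr.
have e : (2^-1 : R)%:A + (2^-1 : R)%:A = 1 :> lb_C E.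
  by rewrite -scalerDl (_ : 2^-1 + 2^-1 = 1 :> R) ?scale1r //; field.
by rewrite -[lb_br s s]scale1r -e scalerDl -scalerDr h scaler0.
Qed.

Lemma C_double R (E : LieAlgebroid R) (x y : lb_C E) :
  (2^-1 : R) *: y = x -> y = x + x.
Proof.
by move=> <-; rewrite -scalerDl (_ : 2^-1 + 2^-1 = 1 :> R) ?scale1r //; field.
Qed.

Lemma C_unhalf R (E : LieAlgebroid R) (x : lb_C E) :
  (2^-1 : R)%:A * x = 0 -> x = 0.
Proof.
by rewrite mulr_algl => h; rewrite (C_double h) addr0.
Qed.

Lemma lin1 (T : zmodType) (a b c d : T) : a = b -> c - d = a - b -> c = d.
Proof. by move=> -> /eqP; rewrite subrr subr_eq0 => /eqP. Qed.

Lemma lin2 (T : zmodType) (a1 b1 a2 b2 c d : T) :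
  a1 = b1 -> a2 = b2 -> c - d = (a1 - b1) + (a2 - b2) -> c = d.
Proof. by move=> -> -> /eqP; rewrite !subrr addr0 subr_eq0 => /eqP. Qed.

Theorem proposition4p2 (R : realType) (E : LieAlgebroid R) (m : nat)
    (F : lb_Sec E -> lb_Sec E) (xi : lb_Sec E) (eta : lb_Sec E -> lb_C E)
    (g : lb_Sec E -> lb_Sec E -> lb_C E) (nabla : lb_Sec E -> lb_Sec E -> lb_Sec E) :
  contact_Riemannian m F xi eta g ->
  is_Levi_Civita g nabla ->
  ((forall s1 s2, N2 F eta s1 s2 = 0) /\ (forall s, N4 xi eta s = 0)) /\
  ((forall s, N3 F xi s = 0) <-> (forall s1 s2, Lie_metric xi g s1 s2 = 0)) /\
  (forall s, cov_endo nabla xi F s = 0).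
Proof.
case=> _ [hF he hg [hF2 hexi] hgF] _ hdE.
case=> _ _ _ htor hmet.
have gsym : forall a b, g a b = g b a by case: hg.
have gl0 u := form1_0 (gform hg u).
have glD u := form1_D (gform hg u).
have glZ u := form1_Z (gform hg u).
have glN u := form1_N (gform hg u).
have glB u := form1_B (gform hg u).
have gr0 u := form1_0 (gformr hg u).
have grD u := form1_D (gformr hg u).
have grZ u := form1_Z (gformr hg u).
have grN u := form1_N (gformr hg u).
have grB u := form1_B (gformr hg u).
have eta0 := form1_0 he. have etaD := form1_D he. have etaZ := form1_Z he.
have etaN := form1_N he. have etaB := form1_B he.
have F0 := endo_0 hF. have FD := endo_D hF. have FZ := endo_Z hF.
have FN := endo_N hF. have FB := endo_B hF.
have F3 : forall s, eta s *: F xi = eta (F s) *: xi.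
  move=> s; have := hF2 (F s); rewrite {1}(hF2 s) FD FN FZ.
  by move/addrI.
have Fxi : F xi = 0.
  have h1 := F3 xi; rewrite hexi scale1r in h1.
  move: h1; set a := eta (F xi) => h1.
  have h2 := hF2 xi; rewrite hexi scale1r addNr h1 FZ h1 scalerA in h2.
  have := congr1 eta h2; rewrite etaZ eta0 hexi mulr1 => /C_sq0 ha.
  by rewrite h1 ha scale0r.
have etaF : forall s, eta (F s) = 0.
  move=> s; have := congr1 eta (F3 s); by rewrite Fxi scaler0 eta0 etaZ hexi mulr1.
have gxi : forall s, g xi s = eta s.
  move=> s; have := hgF xi s; rewrite Fxi gl0 hexi mul1r => /eqP.
  by rewrite eq_sym subr_eq0 => /eqP.
have gskew : forall a b, g (F a) b = - g a (F b).
  move=> a b; have := hgF a (F b); rewrite etaF mulr0 subr0 hF2 grD grZ grN.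
  by rewrite (gsym (F a) xi) gxi etaF mulr0 addr0 => <-; rewrite opprK.
have hD : forall a b, lb_anchor a (eta b) - lb_anchor b (eta a) - eta (lb_br a b)
    = g a (F b) + g a (F b).
  by move=> a b; apply: C_double; exact: hdE.
have h4 : forall s, lb_anchor xi (eta s) = eta (lb_br xi s).
  move=> s; have := hD xi s; rewrite hexi rho1 subr0 gxi etaF addr0.
  by move/eqP; rewrite subr_eq0 => /eqP.
split.
  split=> [s1 s2|s]; last by rewrite /N4 /Lie_form1 h4 subrr.
  rewrite /N2 /Lie_form1.
  have := hD (F s1) s2; have := hD (F s2) s1; rewrite !etaF !rho0 !subr0.
  by move=> -> ->; rewrite gsym subrr.
have LOm : forall Y Z, lb_anchor xi (g Y (F Z)) - g (lb_br xi Y) (F Z)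
    - g Y (F (lb_br xi Z)) = 0.
  move=> Y Z.
  have key : lb_anchor xi (lb_anchor Y (eta Z) - lb_anchor Z (eta Y) - eta (lb_br Y Z))
    - (lb_anchor (lb_br xi Y) (eta Z) - lb_anchor Z (eta (lb_br xi Y)) - eta (lb_br (lb_br xi Y) Z))
    - (lb_anchor Y (eta (lb_br xi Z)) - lb_anchor (lb_br xi Z) (eta Y) - eta (lb_br Y (lb_br xi Z))) = 0.
    rewrite !rhoB !lb_anchor_br !h4.
    rewrite (lb_br_skew (lb_br xi Y) Z) (lb_br_skew xi Z) brNr !etaN.
    have J := congr1 eta (lb_br_jacobi xi Y Z); rewrite !etaD eta0 in J.
    by rewrite -oppr0 -J; ring.
  rewrite !hD !lb_anchor_add in key.
  by apply: C_halve; rewrite -[X in _ = X]key; ring.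
have hLP : forall Y Z, Lie_metric xi g Y (F Z) = - g Y (Lie_endo xi F Z).
  move=> Y Z; apply: (lin1 (LOm Y Z)); rewrite /Lie_metric /Lie_endo grB; ring.
have hLsym : forall a b, Lie_metric xi g a b = Lie_metric xi g b a.
  move=> a b; rewrite /Lie_metric (gsym a b) (gsym (lb_br xi a) b) (gsym a (lb_br xi b)).
  ring.
have hLlin : forall a f b c, Lie_metric xi g a (f *: b + c)
    = f * Lie_metric xi g a b + Lie_metric xi g a c.
  move=> a f b c; rewrite /Lie_metric !grD !grZ brDr lb_br_leibniz !grD !grZ.
  rewrite lb_anchor_add lb_anchor_mul; ring.
have hLxi : forall a, Lie_metric xi g a xi = 0.
  move=> a; rewrite /Lie_metric br_self gr0 (gsym a xi) gxi (gsym _ xi) gxi h4.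
  by rewrite subrr subr0.
have hLdec : forall a Y, Lie_metric xi g a Y = - g a (Lie_endo xi F (- F Y)).
  move=> a Y.
  have eY : Y = eta Y *: xi + F (- F Y).
    by rewrite FN hF2 opprD opprK addrCA subrr addr0.
  by rewrite {1}eY hLlin hLxi mulr0 add0r hLP.
have PN : forall a w, g a (Lie_endo xi F (- w)) = - g a (Lie_endo xi F w).
  move=> a w; by rewrite /Lie_endo FN !brNr FN -opprD grN.
have gsk2 : forall a w, g a (F w) = - g (F a) w.
  by move=> a w; rewrite gskew opprK.
have PFF : forall Y Z, g (F Z) (Lie_endo xi F (F Y)) = - g Z (Lie_endo xi F Y).
  move=> Y Z; rewrite /Lie_endo !grB (gsk2 (F Z)) (gsk2 Z) hF2 (hF2 Z).
  rewrite brDr brNr lb_br_leibniz br_self scaler0 add0r.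
  rewrite !grD !grN !grZ glD glN glZ (gsym (F Z) xi) gxi etaF gxi -h4 etaF rho0.
  ring.
have Psym : forall Y Z, g Y (Lie_endo xi F Z) = g Z (Lie_endo xi F Y).
  move=> Y Z; have := hLP Y Z; rewrite hLsym hLdec PN PFF !opprK.
  by move=> h; apply: oppr_inj.
split.
  split.
    move=> h3 s1 s2.
    have P0 : forall a b, g a (Lie_endo xi F b) = 0.
      move=> a b; apply: C_unhalf; by rewrite -grZ -[_ *: _]/(N3 F xi b) h3 gr0.
    by rewrite hLdec P0 oppr0.
  move=> hL s; rewrite /N3.
  suff -> : Lie_endo xi F s = 0 by rewrite scaler0.
  apply: (g_nondeg hg) => y; have := hLP y s; rewrite hL => /eqP.
  by rewrite eq_sym oppr_eq0 => /eqP.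
have Ahalf : forall Y W, g (nabla Y xi) W + g (nabla Y xi) W
    = Lie_metric xi g Y W - g (F Y) W - g (F Y) W.
  move=> Y W.
  have m1 := hmet Y xi W; have m2 := hmet W xi Y; have m3 := hmet xi Y W.
  rewrite !gxi in m1 m2.
  have dd := hD Y W; rewrite -htor etaB m1 m2 in dd.
  rewrite /Lie_metric m3 -(htor xi Y) -(htor xi W) glB grB -!gsk2 (gsym Y (nabla W xi)).
  apply: (lin1 dd); ring.
move=> Z; rewrite /cov_endo; apply: (g_nondeg hg) => Y.
have e4 : nabla xi (F Z) = lb_br xi (F Z) + nabla (F Z) xi by rewrite -htor subrK.
have e5 : nabla xi Z = lb_br xi Z + nabla Z xi by rewrite -htor subrK.
rewrite grB gsk2 e4 e5 !grD (gsym Y (nabla (F Z) xi)) (gsym (F Y) (nabla Z xi)).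
apply: C_halve.
have A1 := Ahalf (F Z) Y; rewrite hLsym hLP (gskew (F Z) Y) in A1.
have A2 := Ahalf Z (F Y); rewrite hLP (Psym Z Y) in A2.
rewrite /Lie_endo grB (gsk2 Y (lb_br xi Z)) in A1 A2.
apply: (lin2 A1 A2); ring.
Qed.
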